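(* Let $m\ge 1$ and $1\le t\le 2^{m-1}$ be integers and let $p=t/2^m$ (so $0<p\le 1/2$). Let $f:\{0,1\}^n\to\mathbb{R}$ and let $g=\mathrm{Red}(f):\{0,1\}^{mn}\to\mathbb{R}$ be the reduced function defined below. Then for every $1\le d\le n$, \[ \sum_{S\subseteq\{1,\dots,mn\},\,|S|=d}\hat g(S)^2\;\ge\;\Big(\frac{p\lfloor \log(1/p)\rfloor}{1-p}\Big)^d\sum_{S\subseteq\{1,\dots,n\},\,|S|=d}\hat f(S)^2, \] where the Fourier–Walsh coefficients of $g$ are taken with respect to the uniform measure $\mu_{1/2}$ on $\{0,1\}^{mn}$ and those of $f$ with respect to $\mu_p$ on $\{0,1\}^n$.
   Context: For $0<p<1$, $\mu_p$ denotes the product measure on $\{0,1\}^n$ given by $\mu_p(x)=p^{\sum_i x_i}(1-p)^{n-\sum_i x_i}$; $\mu_{1/2}$ is the uniform measure. Elements of $\{0,1\}^n$ are identified with subsets of $\{1,\dots,n\}$ in the natural way. For $S,T\subseteq\{1,\dots,n\}$ let $u_S(T)=\big(-\sqrt{(1-p)/p}\big)^{|S\cap T|}\big(\sqrt{p/(1-p)}\big)^{|S\setminus T|}$ (for $p=1/2$, $u_S(T)=(-1)^{|S\cap T|}$). The $u_S$ form an orthonormal basis of $L^2(\mu_p)$, and every $f$ has a unique expansion $f=\sum_S\hat f(S)u_S$ with $\hat f(S)=\mathbb{E}_{\mu_p}[f u_S]$ (the Fourier–Walsh coefficients w.r.t. $\mu_p$). Reduction: write $y\in\{0,1\}^{mn}$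 as $y=(y^1,\dots,y^n)$ with $y^i=(y^i_1,\dots,y^i_m)\in\{0,1\}^m$, where $y^i_j$ is the coordinate $(i-1)m+j$ of $y$. Let $\mathrm{Bin}(y^i)=\sum_{j=0}^{m-1}2^j y^i_{m-j}\in\{0,\dots,2^m-1\}$, and $h:\{0,1\}^m\to\{0,1\}$, $h(y^i)=1$ if $\mathrm{Bin}(y^i)\ge 2^m-t$ and $h(y^i)=0$ otherwise. Then $\mathrm{Red}(f)=g$ is defined by $g(y)=f(h(y^1),\dots,h(y^n))$. Here $\log$ denotes the base-2 logarithm. *)

(* Defs.v *)
From HB Require Import structures.
From mathcomp Require Import all_boot all_order all_algebra.
From mathcomp Require Import all_classical all_reals all_analysis.
Set Implicit Arguments.
Unset Strict Implicit.
Unset Printing Implicit Defensive.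
Import Order.TTheory GRing.Theory Num.Theory.
Local Open Scope ring_scope.

(* Points of {0,1}^N are identified with subsets of 'I_N (0-based coordinates). *)

Definition mu_p {R : realType} (N : nat) (p : R) (x : {set 'I_N}) : R :=
  p ^+ #|x| * (1 - p) ^+ (N - #|x|)%N.

Definition u_S {R : realType} (N : nat) (p : R) (S T : {set 'I_N}) : R :=
  (- Num.sqrt ((1 - p) / p)) ^+ #|S :&: T| * (Num.sqrt (p / (1 - p))) ^+ #|S :\: T|.

Definition fourier {R : realType} (N : nat) (p : R) (f : {set 'I_N} -> R)
  (S : {set 'I_N}) : R :=
  \sum_(T : {set 'I_N}) mu_p p T * (f T * u_S p S T).

Definition level_weight {R : realType} (N : nat) (p : R) (f : {set 'I_N} -> R)
  (d : nat) : R :=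
  \sum_(S : {set 'I_N} | #|S| == d) (fourier p f S) ^+ 2.

Definition coord (N : nat) (y : {set 'I_N}) (k : nat) : bool :=
  [exists k' : 'I_N, (val k' == k) && (k' \in y)].

(* Bin(y^i) for the 0-based block i: y^i_j (1-based j) is the 0-based
   coordinate i*m + (j-1); Bin(y^i) = sum_{j=0}^{m-1} 2^j y^i_{m-j}. *)
Definition Bin (m n : nat) (y : {set 'I_(m * n)}) (i : nat) : nat :=
  \sum_(j < m) 2 ^ j * coord y (i * m + (m - 1 - j)).

Definition h (m t n : nat) (y : {set 'I_(m * n)}) (i : nat) : bool :=
  (2 ^ m - t <= Bin y i)%N.

Definition Red {R : realType} (m : nat) (t : nat) {n : nat} (f : {set 'I_n} -> R)
  (y : {set 'I_(m * n)}) : R :=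
  f [set i : 'I_n | h t y i].

Definition log2 {R : realType} (x : R) : R := ln x / ln 2.
Arguments Red {R} m t {n} f y.

(* Main.v *)
Require Import Defs.
From HB Require Import structures.
From mathcomp Require Import all_boot all_order all_algebra.
From mathcomp Require Import all_classical all_reals all_analysis.
From mathcomp Require Import ring lra zify.
Import Order.TTheory GRing.Theory Num.Theory.
Set Implicit Arguments.
Unset Strict Implicit.
Unset Printing Implicit Defensive.

Section Part1.

Lemma bin_split m (b : nat -> bool) :
  \sum_(i < m.+1) 2 ^ i * b i = b 0 + 2 * \sum_(i < m) 2 ^ i * b i.+1.
Proof.
rewrite big_ord_recl /= expn0 mul1n; congr (_ + _).
rewrite big_distrr /=; apply: eq_bigr => i _.
by rewrite /= expnS mulnA.
Qed.

Lemma bin_inj_gen m (b b' : nat -> bool) :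
  \sum_(i < m) 2 ^ i * b i = \sum_(i < m) 2 ^ i * b' i ->
  forall i, i < m -> b i = b' i.
Proof.
elim: m b b' => [//|m IH] b b'.
rewrite !bin_split => E.
have E0 : b 0 = b' 0.
  have := congr1 odd E; rewrite !oddD /= !addbF !addbb !addbF.
  by case: (b 0); case: (b' 0).
move: E; rewrite E0 => /addnI /eqP; rewrite eqn_pmul2l // => /eqP E.
case=> [//|i] Hi; exact: (IH (fun i => b i.+1) (fun i => b' i.+1) E i Hi).
Qed.

Lemma sum_pow2 m : (\sum_(i < m) 2 ^ i).+1 = 2 ^ m.
Proof.
elim: m => [|m IH]; first by rewrite big_ord0.
rewrite big_ord_recr /= -addSn IH expnS; lia.
Qed.

Lemma bin_le m (b : nat -> bool) (i0 : nat) : i0 < m -> b i0 = false ->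
  \sum_(i < m) 2 ^ i * b i + 2 ^ i0 <= \sum_(i < m) 2 ^ i.
Proof.
move=> Hi Hb.
rewrite (bigD1 (Ordinal Hi)) //= [X in _ <= X](bigD1 (Ordinal Hi)) //= Hb muln0 add0n addnC leq_add2l.
apply: leq_sum => i _; case: (b i); lia.
Qed.

Lemma bin_lt m (b : nat -> bool) : \sum_(i < m) 2 ^ i * b i < 2 ^ m.
Proof.
rewrite -sum_pow2 ltnS; apply: leq_sum => i _; case: (b i); lia.
Qed.

Definition binz (m : nat) (z : {set 'I_m}) : nat :=
  \sum_(j < m) 2 ^ j * Defs.coord z (m - 1 - j).

Lemma coord_ord m (z : {set 'I_m}) (j : 'I_m) : Defs.coord z j = (j \in z).
Proof.
apply/existsP/idP => [[k /andP[/eqP/val_inj -> //]]|H].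
by exists j; rewrite eqxx H.
Qed.

Lemma coord_ge m (z : {set 'I_m}) k : (m <= k)%N -> Defs.coord z k = false.
Proof.
move=> H; apply/existsP => [[k' /andP[/eqP E _]]].
have := ltn_ord k'; rewrite E; lia.
Qed.

Lemma binz_inj m : injective (@binz m).
Proof.
move=> z z' E.
have := @bin_inj_gen m (fun j => Defs.coord z (m - 1 - j)) (fun j => Defs.coord z' (m - 1 - j)) E => H.
apply/setP => a.
have Ha : (m - 1 - a < m)%N by have := ltn_ord a; lia.
have := H _ Ha.
have -> : (m - 1 - (m - 1 - a) = a)%N by have := ltn_ord a; lia.
by rewrite !coord_ord.
Qed.

Lemma binz_lt m (z : {set 'I_m}) : (binz z < 2 ^ m)%N.
Proof. exact: (@bin_lt m (fun j => Defs.coord z (m - 1 - j))). Qed.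

End Part1.
Section Part2.

Lemma card_setI m : #|{set 'I_m}| = 2 ^ m.
Proof. by rewrite -cardsT -powersetT card_powerset cardsT card_ord. Qed.

Definition binzo m (z : {set 'I_m}) : 'I_(2 ^ m) := Ordinal (binz_lt z).

Lemma binzo_bij m : bijective (@binzo m).
Proof.
apply: inj_card_bij; last by rewrite card_setI card_ord.
by move=> z z' /(congr1 val) /= /binz_inj.
Qed.

Definition hz m t (z : {set 'I_m}) : bool := (2 ^ m - t <= binz z)%N.

Local Open Scope ring_scope.

Lemma count_top (R : nzRingType) N t : (t <= N)%N ->
  \sum_(x < N) (if (N - t <= x)%N then 1 else 0 : R) = t%:R.
Proof.
move=> Ht.
rewrite -(big_mkord xpredT (fun x => (if (N - t <= x)%N then 1 else 0 : R))).
rewrite (big_cat_nat _ (leq_subr t N)) //=.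
rewrite big_nat_cond big1 ?add0r; last first.
  by move=> i /andP[/andP[_ Hi] _]; rewrite leqNgt Hi.
rewrite big_nat_cond (eq_bigr (fun _ => 1)); last first.
  by move=> i /andP[/andP[Hi _] _]; rewrite Hi.
by rewrite -big_nat_cond sumr_const_nat subKn.
Qed.

Lemma sum_hz (R : nzRingType) m t : (t <= 2 ^ m)%N ->
  \sum_(z : {set 'I_m}) (if hz t z then 1 else 0 : R) = t%:R.
Proof.
move=> Ht; rewrite -(count_top R Ht).
rewrite (reindex (@binzo m)) /=; last exact: onW_bij (binzo_bij m).
by [].
Qed.

Lemma sum_all (R : nzRingType) m :
  \sum_(z : {set 'I_m}) (1 : R) = (2 ^ m)%:R.
Proof. by rewrite sumr_const card_setI. Qed.

Definition tog m (j : 'I_m) (z : {set 'I_m}) : {set 'I_m} :=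
  if j \in z then z :\ j else j |: z.

Lemma togK m (j : 'I_m) : involutive (tog j).
Proof.
move=> z; rewrite {2}/tog; case: ifP => H; rewrite /tog.
  by rewrite finset.setD11 finset.setD1K.
by rewrite finset.setU11 finset.setU1K ?H.
Qed.

Lemma sum_sign (R : numFieldType) m (j : 'I_m) :
  \sum_(z : {set 'I_m}) (if j \in z then -1 else 1 : R) = 0.
Proof.
set S := \sum_(z : _) _.
have E : S = - S.
  rewrite {1}/S (reindex_inj (inv_inj (@togK m j))) /S -sumrN.
  apply: eq_bigr => z _; rewrite /tog; case: (boolP (j \in z)) => H.
    by rewrite finset.setD11 opprK.
  by rewrite finset.setU11.
have : S + S = 0 by rewrite {1}E addNr.
by rewrite -mulr2n -mulr_natr => /eqP; rewrite mulf_eq0 pnatr_eq0 orbF => /eqP.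
Qed.

Lemma top_bit m t k (z : {set 'I_m}) (j : 'I_m) :
  (1 <= t)%N -> (2 ^ k * t <= 2 ^ m)%N -> (j < k)%N -> hz t z -> j \in z.
Proof.
move=> Ht Hk Hj; rewrite /hz; apply: contraTT => Hz.
have Hi : (m - 1 - j < m)%N by have := ltn_ord j; lia.
have Hb : Defs.coord z (m - 1 - (m - 1 - j)) = false.
  have -> : (m - 1 - (m - 1 - j) = j)%N by have := ltn_ord j; lia.
  by rewrite coord_ord (negbTE Hz).
have := @bin_le m (fun i => Defs.coord z (m - 1 - i)) _ Hi Hb.
rewrite -/(binz z) -ltnS sum_pow2 => Hle.
have km : (k <= m)%N.
  rewrite -(leq_exp2l _ _ (ltnSn 1)); apply: leq_trans Hk.
  by rewrite leq_pmulr.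
have Et : (t <= 2 ^ (m - k))%N.
  have : (2 ^ k * t <= 2 ^ k * 2 ^ (m - k))%N by rewrite -expnD subnKC.
  by rewrite leq_pmul2l ?expn_gt0.
have E2 : (2 ^ (m - k) <= 2 ^ (m - 1 - j))%N.
  by rewrite leq_exp2l //; have := ltn_ord j; lia.
rewrite -ltnNge; lia.
Qed.

End Part2.
Section Part3.

Section Blocks.
Variables m n : nat.

Lemma emb_lt (i : 'I_n) (j : 'I_m) : (i * m + j < m * n)%N.
Proof. have := ltn_ord i; have := ltn_ord j; nia. Qed.

Definition emb (i : 'I_n) (j : 'I_m) : 'I_(m * n) := Ordinal (emb_lt i j).

Lemma emb_inj i j i' j' : emb i j = emb i' j' -> i = i' /\ j = j'.
Proof.
move=> /(congr1 val) /= E.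
have Hj := ltn_ord j; have Hj' := ltn_ord j'.
have Ei : (i : nat) = i'.
  have := congr1 (fun x => x %/ m)%N E.
  by rewrite !divnMDl ?divn_small //; lia.
split; apply: val_inj => //=; lia.
Qed.

Definition blk (y : {set 'I_(m * n)}) : {ffun 'I_n -> {set 'I_m}} :=
  [ffun i => [set j | emb i j \in y]].

Definition unblk (F : {ffun 'I_n -> {set 'I_m}}) : {set 'I_(m * n)} :=
  [set k | [exists i, exists j, (k == emb i j) && (j \in F i)]].

Lemma blkK : cancel unblk blk.
Proof.
move=> F; apply/ffunP => i; apply/setP => j; rewrite ffunE inE inE.
apply/existsP/idP => [[i' /existsP[j' /andP[/eqP /emb_inj [-> ->] //]]]|H].
by exists i; apply/existsP; exists j; rewrite eqxx H.
Qed.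

Lemma unblkK : cancel blk unblk.
Proof.
move=> y; apply/setP => k; rewrite inE.
apply/existsP/idP => [[i /existsP[j /andP[/eqP -> ]]]|H].
  by rewrite ffunE inE.
have Hm : (0 < m)%N by have := ltn_ord k; move: (k : nat) => kk; nia.
have Hi : (k %/ m < n)%N by rewrite ltn_divLR //; have := ltn_ord k; move: (k : nat) => kk; nia.
have Hj : (k %% m < m)%N by rewrite ltn_mod.
exists (Ordinal Hi); apply/existsP; exists (Ordinal Hj).
have Ek : k = emb (Ordinal Hi) (Ordinal Hj).
  by apply: val_inj => /=; rewrite -divn_eq.
by rewrite -Ek eqxx ffunE inE -Ek H.
Qed.

Lemma unblk_bij : bijective unblk.
Proof. by exists blk; [exact: blkK | exact: unblkK]. Qed.

Lemma coord_val N (y : {set 'I_N}) (k : 'I_N) kn : (k : nat) = kn ->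
  Defs.coord y kn = (k \in y).
Proof. by move=> <-; rewrite coord_ord. Qed.

Lemma Bin_blk (y : {set 'I_(m * n)}) (i : 'I_n) : Bin y i = binz (blk y i).
Proof.
apply: eq_bigr => j _; congr (_ * _); congr (nat_of_bool _).
have Ha : (m - 1 - j < m)%N by have := ltn_ord j; lia.
rewrite (coord_val y (k := emb i (Ordinal Ha))) //.
by rewrite (coord_val _ (k := Ordinal Ha)) // ffunE inE.
Qed.

Lemma h_blk t (y : {set 'I_(m * n)}) (i : 'I_n) : h t y i = hz t (blk y i).
Proof. by rewrite /h /hz Bin_blk. Qed.

Definition TT (S : {set 'I_n}) (J : {ffun 'I_n -> 'I_m}) : {set 'I_(m * n)} :=
  [set emb i (J i) | i in S].

Lemma embJ_inj (J : {ffun 'I_n -> 'I_m}) : injective (fun i => emb i (J i)).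
Proof. by move=> i i' /emb_inj []. Qed.

Lemma card_TT S J : #|TT S J| = #|S|.
Proof. by rewrite card_imset //; exact: embJ_inj. Qed.

Lemma TTI S J (y : {set 'I_(m * n)}) :
  #|TT S J :&: y| = #|[set i in S | J i \in blk y i]|.
Proof.
rewrite -[RHS](card_imset _ (@embJ_inj J)); apply: eq_card => k.
rewrite inE; apply/andP/imsetP => [[/imsetP[i Hi ->] Hy]|[i]].
  by exists i => //; rewrite inE Hi ffunE inE.
rewrite inE ffunE inE => /andP[Hi Hy] ->; split => //.
by apply/imsetP; exists i.
Qed.

Lemma TT_inj (j0 : 'I_m) (S S' : {set 'I_n}) (J J' : {ffun 'I_n -> 'I_m}) :
  (forall i, i \notin S -> J i = j0) -> (forall i, i \notin S' -> J' i = j0) ->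
  TT S J = TT S' J' -> S = S' /\ J = J'.
Proof.
move=> HJ HJ' E.
have HS : S = S'.
  apply/setP => i; apply/idP/idP => Hi.
    have : emb i (J i) \in TT S' J' by rewrite -E; apply/imsetP; exists i.
    by case/imsetP => i' Hi' /emb_inj [-> _].
  have : emb i (J' i) \in TT S J by rewrite E; apply/imsetP; exists i.
  by case/imsetP => i' Hi' /emb_inj [-> _].
split => //; apply/ffunP => i.
case: (boolP (i \in S)) => Hi; last by rewrite HJ // HJ' // -HS.
have : emb i (J i) \in TT S' J' by rewrite -E; apply/imsetP; exists i.
by case/imsetP => i' Hi' /emb_inj [<- ->].
Qed.

End Blocks.

End Part3.
Section Part4.
Local Open Scope ring_scope.

Lemma prod_if (R : comNzRingType) (I : finType) (A B : {set I}) (a b : R) :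
  \prod_(i in A) (if i \in B then b else a) = b ^+ #|A :&: B| * a ^+ #|A :\: B|.
Proof.
rewrite (bigID (mem B)) /=.
rewrite (eq_bigr (fun _ => b)); last by move=> i /andP[_ ->].
rewrite [X in _ * X](eq_bigr (fun _ => a)); last by move=> i /andP[_ /negbTE ->].
rewrite (eq_bigl (mem (A :&: B))); last by move=> i; rewrite !inE.
rewrite [X in _ * X](eq_bigl (mem (A :\: B))); last by move=> i; rewrite !inE andbC.
by rewrite !prodr_const.
Qed.

Lemma mu_p_prod (R : realType) n (p : R) (x : {set 'I_n}) :
  mu_p p x = \prod_(i : 'I_n) (if i \in x then p else 1 - p).
Proof.
rewrite (eq_bigl (fun i => i \in [set: 'I_n])); last by move=> i; rewrite inE.
rewrite prod_if finset.setTI /mu_p; congr (_ * _ ^+ _).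
rewrite finset.setTD; have E := cardsC x; rewrite card_ord in E.
by move: E; move: #|x| #|~: x| => a b; lia.
Qed.

Lemma u_S_prod (R : realType) n (p : R) (S x : {set 'I_n}) :
  u_S p S x = \prod_(i in S) (if i \in x then - Num.sqrt ((1 - p) / p)
                                            else Num.sqrt (p / (1 - p))).
Proof. by rewrite prod_if. Qed.

Lemma half_pow (R : realType) m : (1 / 2 : R) ^+ m = ((2 ^ m)%:R)^-1.
Proof. by rewrite div1r natrX exprVn. Qed.

Lemma negR (R : nzRingType) (b : bool) : ((~~ b)%:R : R) = 1 - b%:R.
Proof. by case: b; rewrite ?subrr ?subr0. Qed.

Section Block.
Variables (R : realType) (m t : nat).
Hypothesis Ht1 : (1 <= t)%N.
Hypothesis Htm : (t <= 2 ^ m)%N.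
Let p : R := t%:R / (2 ^ m)%:R.
Let q : R := (1 / 2) ^+ m.

Lemma q2 : q * (2 ^ m)%:R = 1.
Proof. by rewrite /q half_pow mulVf // pnatr_eq0 expn_eq0. Qed.

Lemma sum_hzR : \sum_(z : {set 'I_m}) ((hz t z)%:R : R) = t%:R.
Proof.
rewrite -(sum_hz R Htm); apply: eq_bigr => z _; by case: (hz t z).
Qed.

Lemma block_notS (c : bool) :
  \sum_(z : {set 'I_m}) q * ((hz t z == c)%:R * 1) = if c then p else 1 - p.
Proof.
rewrite -mulr_sumr.
case: c.
  under eq_bigr do rewrite eqb_id mulr1.
  by rewrite sum_hzR /p /q half_pow mulrC.
under eq_bigr do rewrite eqbF_neg mulr1 negR.
rewrite sumrB sum_hzR sum_all mulrBr q2 /p /q half_pow mulrC.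
by [].
Qed.

Lemma block_S k (j : 'I_m) (c : bool) :
  (2 ^ k * t <= 2 ^ m)%N -> (j < k)%N ->
  \sum_(z : {set 'I_m}) q * ((hz t z == c)%:R * (if j \in z then -1 else 1))
    = if c then - p else p.
Proof.
move=> Hk Hj; rewrite -mulr_sumr.
have E : forall z : {set 'I_m}, (hz t z)%:R * (if j \in z then -1 else 1) = - ((hz t z)%:R : R).
  by move=> z; case: (boolP (hz t z)) => H; rewrite ?(top_bit Ht1 Hk Hj H) ?mul0r ?oppr0 // mul1r.
case: c.
  under eq_bigr do rewrite eqb_id E.
  by rewrite sumrN sum_hzR /p /q half_pow mulrN mulrC.
under eq_bigr do rewrite eqbF_neg negR.
under eq_bigr do rewrite mulrBl mul1r E opprK.
by rewrite big_split /= sum_sign add0r sum_hzR /p /q half_pow mulrC.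
Qed.

End Block.

End Part4.
Section Part5.
Local Open Scope ring_scope.

Lemma prod_ind (R : comNzRingType) (I : finType) (X x : {set I}) :
  \prod_(i : I) (((i \in X) == (i \in x))%:R : R) = (X == x)%:R.
Proof.
case: (eqVneq X x) => [->|ne].
  by rewrite big1 // => i _; rewrite eqxx.
have [i Hi] : exists i, (i \in X) != (i \in x).
  apply/existsP; move: ne; apply: contraNT; rewrite negb_exists => /forallP H.
  by apply/eqP/setP => i; have := H i; rewrite negbK => /eqP.
by rewrite (bigD1 i) //= (negbTE Hi) mul0r.
Qed.

Section Main.
Variables (R : realType) (m t n : nat) (f : {set 'I_n} -> R).
Variables (S : {set 'I_n}) (J : {ffun 'I_n -> 'I_m}) (k : nat).
Hypothesis Ht1 : (1 <= t)%N.
Hypothesis Htm : (t < 2 ^ m)%N.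
Hypothesis Hk : (2 ^ k * t <= 2 ^ m)%N.
Hypothesis HJ : forall i, i \in S -> (J i < k)%N.

Let p : R := t%:R / (2 ^ m)%:R.
Let a : R := Num.sqrt (p / (1 - p)).
Let b : R := - Num.sqrt ((1 - p) / p).
Let q : R := (1 / 2) ^+ m.

Lemma p_gt0 : 0 < p.
Proof. by rewrite /p divr_gt0 // ltr0n // expn_gt0. Qed.

Lemma p_lt1 : p < 1.
Proof. by rewrite /p ltr_pdivrMr ?mul1r ?ltr_nat // ltr0n expn_gt0. Qed.

Lemma ab : a * b = -1.
Proof.
have h1 := p_gt0; have h2 := p_lt1.
rewrite /a /b mulrN -sqrtrM; last by apply: divr_ge0; lra.
have -> : p / (1 - p) * ((1 - p) / p) = 1.
  by field; apply/andP; split; apply/eqP; lra.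
by rewrite sqrtr1.
Qed.

Lemma aa : (1 - p) * a ^+ 2 = p.
Proof.
have h1 := p_gt0; have h2 := p_lt1.
rewrite /a sqr_sqrtr; last by apply: divr_ge0; lra.
by field; apply/eqP; lra.
Qed.

Definition Qx (x : {set 'I_n}) (i : 'I_n) (z : {set 'I_m}) : R :=
  q * (((hz t z) == (i \in x))%:R *
       (if i \in S then (if J i \in z then -1 else 1) else 1)).

Lemma sumQ x i : \sum_(z : {set 'I_m}) Qx x i z =
  if i \in S then (if i \in x then - p else p) else (if i \in x then p else 1 - p).
Proof.
rewrite /Qx; case: (boolP (i \in S)) => Hi.
  exact: (block_S R Ht1 (ltnW Htm) (i \in x) Hk (HJ Hi)).
exact: (block_notS R (ltnW Htm) (i \in x)).
Qed.

Lemma prodW (x : {set 'I_n}) : \prod_(i : 'I_n)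
    (if i \in S then (if i \in x then - p else p) else (if i \in x then p else 1 - p))
  = a ^+ #|S| * (mu_p p x * u_S p S x).
Proof.
rewrite mu_p_prod u_S_prod -/a -/b.
rewrite (big_mkcond (fun i => i \in S)) /=.
have -> : a ^+ #|S| = \prod_(i : 'I_n) (if i \in S then a else 1).
  by rewrite -big_mkcond prodr_const.
rewrite -!big_split /=; apply: eq_bigr => i _.
have h1 := ab; have h2 := aa.
case: (i \in S); case: (i \in x).
- by rewrite mulrCA h1 mulrN1.
- by rewrite -{1}h2; ring.
- by rewrite mul1r mulr1.
- by rewrite mul1r mulr1.
Qed.

Lemma mu_half N (y : {set 'I_N}) : mu_p (1 / 2 : R) y = (1 / 2) ^+ N.
Proof.
rewrite mu_p_prod (eq_bigr (fun _ => 1 / 2)); last first.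
  by move=> i _; case: ifP => // _; field.
by rewrite prodr_const card_ord.
Qed.

Lemma u_half (y : {set 'I_(m * n)}) : u_S (1 / 2 : R) (TT S J) y =
  \prod_(i in S) (if J i \in blk y i then -1 else 1).
Proof.
rewrite /u_S.
have -> : (1 - 1 / 2) / (1 / 2) = 1 :> R by field.
have -> : (1 / 2) / (1 - 1 / 2) = 1 :> R by field.
rewrite sqrtr1 expr1n mulr1 TTI.
rewrite (eq_bigr (fun i => if i \in [set i | J i \in blk y i] then -1 else 1)); last first.
  by move=> i _; rewrite inE.
rewrite prod_if expr1n mulr1; congr (_ ^+ _); apply: eq_card => i.
by rewrite !inE.
Qed.

Definition G (F : {ffun 'I_n -> {set 'I_m}}) : R :=
  (\prod_(i : 'I_n) q) * (f [set i | hz t (F i)] *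
      \prod_(i in S) (if J i \in F i then -1 else 1)).

Lemma G_expand F : G F = \sum_(x : {set 'I_n}) f x * \prod_(i : 'I_n) Qx x i (F i).
Proof.
rewrite (bigD1 [set i | hz t (F i)]) //= [X in _ + X]big1 ?addr0; last first.
  move=> x Hx; rewrite /Qx big_split /= big_split /=.
  have -> : \prod_(i : 'I_n) ((hz t (F i) == (i \in x))%:R : R) = 0.
    rewrite (eq_bigr (fun i => ((i \in [set i | hz t (F i)]) == (i \in x))%:R)); last first.
      by move=> i _; rewrite inE.
    by rewrite prod_ind eq_sym (negbTE Hx).
  by rewrite mul0r mulr0 mulr0.
rewrite /Qx /G big_split /= big_split /=.
have -> : \prod_(i : 'I_n)
    ((hz t (F i) == (i \in [set i0 | hz t (F i0)]))%:R : R) = 1.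
  by rewrite big1 // => i _; rewrite inE eqxx.
by rewrite -big_mkcond /= mul1r mulrCA.
Qed.

Theorem fourier_g :
  fourier (1 / 2) (Red m t f) (TT S J) = a ^+ #|S| * fourier p f S.
Proof.
rewrite /fourier.
have E1 : forall y : {set 'I_(m * n)},
  mu_p (1 / 2 : R) y * (Red m t f y * u_S (1 / 2) (TT S J) y) = G (blk y).
  move=> y; rewrite mu_half u_half /G prodr_const card_ord /q -exprM mulnC.
  congr (_ * (_ * _)); rewrite /Red; congr f; apply/setP => i.
  by rewrite !inE h_blk.
rewrite (eq_bigr _ (fun y _ => E1 y)).
rewrite (reindex (@unblk m n)) /=; last exact: onW_bij (unblk_bij m n).
under eq_bigr do rewrite blkK G_expand.
rewrite exchange_big /=.
under eq_bigr do rewrite -mulr_sumr -bigA_distr_bigA.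
under eq_bigr do (under eq_bigr do rewrite sumQ; rewrite prodW).
rewrite mulr_sumr; apply: eq_bigr => x _; ring.
Qed.

End Main.

End Part5.
Section Part6.
Local Open Scope ring_scope.

Lemma count_low (R : nzRingType) N k : (k <= N)%N ->
  \sum_(x < N) ((x < k)%N%:R : R) = k%:R.
Proof.
move=> Hk.
rewrite -(big_mkord xpredT (fun x => ((x < k)%N%:R : R))).
rewrite (big_cat_nat (n := k) (leq0n k) Hk) /=.
rewrite [X in _ + X]big_nat_cond [X in _ + X]big1 ?addr0; last first.
  by move=> i /andP[/andP[Hi _] _]; rewrite ltnNge Hi.
rewrite big_nat_cond (eq_bigr (fun _ => 1)); last first.
  by move=> i /andP[/andP[_ Hi] _]; rewrite Hi.
by rewrite -big_nat_cond sumr_const_nat subn0.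
Qed.

Lemma count_fam (R : comNzRingType) m n (S : {set 'I_n}) k (j0 : 'I_m) :
  (k <= m)%N ->
  \sum_(J : {ffun 'I_n -> 'I_m})
     (([forall i, if i \in S then (J i < k)%N else J i == j0]) %:R : R)
  = (k ^ #|S|)%:R.
Proof.
move=> Hkm.
have E : forall J : {ffun 'I_n -> 'I_m},
   (([forall i, if i \in S then (J i < k)%N else J i == j0]) %:R : R) =
   \prod_(i : 'I_n) ((if i \in S then (J i < k)%N else J i == j0)%:R).
  move=> J; case: (boolP [forall i, _]) => [/forallP H|].
    by rewrite big1 // => i _; rewrite H.
  rewrite negb_forall => /existsP[i Hi].
  by rewrite (bigD1 i) //= (negbTE Hi) mul0r.
rewrite (eq_bigr _ (fun J _ => E J)) -(bigA_distr_bigA (fun i (j : 'I_m) => ((if i \in S then (j < k)%N else j == j0)%:R : R))) /=.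
rewrite (eq_bigr (fun i => if i \in S then k%:R else 1)); last first.
  move=> i _; case: (i \in S).
    by rewrite (count_low R Hkm).
  by rewrite (bigD1 j0) //= eqxx big1 ?addr0 // => j /negbTE ->.
by rewrite -big_mkcond prodr_const natrX.
Qed.

End Part6.
Unset Implicit Arguments.
Local Open Scope ring_scope.

Lemma floor_bound (R : realType) (m t : nat) :
  (1 <= t)%N -> (t < 2 ^ m)%N ->
  let p : R := t%:R / (2 ^ m)%:R in
  exists k : nat, (Num.floor (log2 (1 / p)))%:~R = k%:R :> R /\
    (2 ^ k * t <= 2 ^ m)%N.
Proof.
move=> Ht1 Htm p.
have hp : 0 < p by rewrite /p divr_gt0 // ltr0n // expn_gt0.
have hp1 : p < 1 by rewrite /p ltr_pdivrMr ?mul1r ?ltr_nat // ltr0n expn_gt0.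
have l2 : 0 < ln (2 : R) by apply: ln_gt0; lra.
have ip : 1 <= 1 / p by rewrite ler_pdivlMr // mul1r; lra.
have HK : 0 <= Num.floor (log2 (1 / p)).
  by rewrite floor_ge0 /log2; apply: divr_ge0; [exact: ln_ge0 | exact: ltW].
exists `|Num.floor (log2 (1 / p))|%N; split.
  by rewrite -[in LHS](gez0_abs HK).
set k := `|_|%N.
have Hfl := floor_le (log2 (1 / p)).
rewrite -(gez0_abs HK) -/k /log2 ler_pdivlMr // in Hfl.
have Hk : ln ((2 : R) ^+ k) <= ln (1 / p).
  by move: Hfl; rewrite pmulrn lnXn ?ltr0n // -mulr_natl.
rewrite ler_ln ?posrE ?exprn_gt0 ?ltr0n // ?divr_gt0 // in Hk.
have : (2 : R) ^+ k * t%:R <= (2 ^ m)%:R.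
  by move: Hk; rewrite /p div1r invf_div ler_pdivlMr ?ltr0n.
  by rewrite -natrX -natrM ler_nat.
by rewrite ltr0n.
Qed.

Theorem theorem1p2 (R : realType) (m t n : nat) (f : {set 'I_n} -> R) (d : nat) :
  (1 <= m)%N -> (1 <= t)%N -> (t <= 2 ^ (m - 1))%N ->
  (1 <= d)%N -> (d <= n)%N ->
  let p : R := t%:R / (2 ^ m)%:R in
  ((p * (Num.floor (log2 (1 / p)))%:~R) / (1 - p)) ^+ d * level_weight p f d
    <= level_weight (1 / 2 : R) (Red m t f) d.
Proof.
move=> Hm Ht1 Ht2 Hd1 Hdn; cbv zeta; set p : R := t%:R / (2 ^ m)%:R.
have Htm : (t < 2 ^ m)%N.
  apply: (leq_ltn_trans Ht2); rewrite ltn_exp2l //; lia.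
have [k [Ek Hk]] := @floor_bound R m t Ht1 Htm.
rewrite -/p in Ek; rewrite Ek.
have hp : 0 < p by rewrite /p divr_gt0 // ltr0n // expn_gt0.
have hp1 : p < 1 by rewrite /p ltr_pdivrMr ?mul1r ?ltr_nat // ltr0n expn_gt0.
have km : (k <= m)%N.
  rewrite -(leq_exp2l _ _ (ltnSn 1)); apply: leq_trans Hk.
  by rewrite leq_pmulr.
set a : R := Num.sqrt (p / (1 - p)).
have a2 : a ^+ 2 = p / (1 - p) by rewrite sqr_sqrtr // divr_ge0 //; lra.
pose j0 : 'I_m := Ordinal Hm.
pose cond (q : {set 'I_n} * {ffun 'I_n -> 'I_m}) :=
  (#|q.1| == d) && [forall i, if i \in q.1 then (q.2 i < k)%N else q.2 i == j0].
pose Dom := [set q | cond q].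
pose TTq (q : {set 'I_n} * {ffun 'I_n -> 'I_m}) := TT q.1 q.2.
pose w T := fourier (1 / 2 : R) (Red m t f) T ^+ 2.
have step1 : \sum_(T in [set TTq q | q in Dom]) w T <= level_weight (1 / 2 : R) (Red m t f) d.
  rewrite /level_weight [X in _ <= X](bigID (fun T => T \in [set TTq q | q in Dom])) /=.
  rewrite -[X in X <= _]addr0; apply: lerD.
    rewrite le_eqVlt; apply/orP; left; apply/eqP; apply: eq_bigl => T.
    case: (boolP (T \in _)) => HT; rewrite ?andbF ?andbT //.
    case/imsetP: HT => q; rewrite inE => /andP[/eqP Hq _] ->.
    by rewrite card_TT Hq eqxx.
  by apply: sumr_ge0 => T _; rewrite /w sqr_ge0.
apply: le_trans step1.
rewrite big_imset /=; last first.
  move=> [S J] [S' J']; rewrite !inE => /andP[_ /forallP H] /andP[_ /forallP H'] E.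
  have [|||-> ->] := TT_inj (j0 := j0) (S := S) (S' := S') (J := J) (J' := J').
  - by move=> i /negbTE Hi; have := H i; rewrite /= Hi => /eqP.
  - by move=> i /negbTE Hi; have := H' i; rewrite /= Hi => /eqP.
  - exact: E.
  - by [].
have Ew : forall q, q \in Dom -> w (TTq q) = (p / (1 - p)) ^+ d * fourier p f q.1 ^+ 2.
  move=> [S J]; rewrite inE => /andP[/eqP HS /forallP H].
  rewrite /w /TTq /= (fourier_g f Ht1 Htm Hk) -/a; last first.
    by move=> i Hi; have := H i; rewrite /= Hi.
  by rewrite exprMn -exprM mulnC exprM a2 HS.
rewrite (eq_bigr _ Ew).
rewrite (eq_bigl (fun q => cond q)); last by move=> q; rewrite inE.
rewrite /cond -(pair_big_dep (fun S : {set 'I_n} => #|S| == d)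
   (fun S (J : {ffun 'I_n -> 'I_m}) => [forall i, if i \in S then (J i < k)%N else J i == j0])
   (fun S J => (p / (1 - p)) ^+ d * fourier p f S ^+ 2)) /=.
rewrite /level_weight mulr_sumr; apply: ler_sum => S /eqP HS.
have -> : \sum_(J : {ffun 'I_n -> 'I_m} | [forall i, if i \in S then (J i < k)%N else J i == j0])
    (p / (1 - p)) ^+ d * fourier p f S ^+ 2 =
  \sum_(J : {ffun 'I_n -> 'I_m})
    (([forall i, if i \in S then (J i < k)%N else J i == j0])%:R *
     ((p / (1 - p)) ^+ d * fourier p f S ^+ 2)).
  rewrite big_mkcond /=; apply: eq_bigr => J _.
  by case: ifP; rewrite ?mul1r ?mul0r.
rewrite -mulr_suml count_fam // HS natrX.
rewrite le_eqVlt; apply/orP; left; apply/eqP.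
rewrite mulrA; congr (_ * _).
rewrite -exprMn; congr (_ ^+ _); rewrite /p; field.
have Ht' : (t%:R : R) < (2 ^ m)%:R by rewrite ltr_nat.
have Ht0 : (0 : R) <= t%:R by [].
apply/andP; split; apply/eqP; lra.
Qed.
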